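(* If a connected DGA has a nontrivial $a$-Massey product, then it is not formal.
   Context: A DGA is a graded-commutative differential graded algebra over $\mathbb R$, connected if $H^0=\mathbb R$; $|x|$ denotes degree and $\overline{x}=(-1)^{|x|}x$. Given closed $a,b_1,\dots,b_n$ with $|a|$ even and each $a\wedge b_i$ exact, the $a$-Massey product is $\langle a;b_1,\dots,b_n\rangle=\{[\sum_{i=1}^n\overline{\xi_1}\wedge\cdots\wedge\overline{\xi_{i-1}}\wedge b_i\wedge\xi_{i+1}\wedge\cdots\wedge\xi_n] : d\xi_i=a\wedge b_i\}\subset H$; it is nontrivial if it does not contain $0$. A DGA is minimal if it is free as a graded-commutative algebra on generators $\{a_\tau\}$ indexed by a well-ordered set with $|a_\mu|\le|a_\tau|$ for $\mu<\tau$ and each $da_\tau$ expressed in terms of preceding generators; a minimal model of $\mathcal A$ is a minimal DGA $\mathcal M$ with a morphism $\mathcal M\to\mathcal A$ inducing an isomorphism in cohomology; $\mathcal A$ is formal if there is a DGA morphism $\mathcal M\to H(\mathcal A)$ (with zero differential) inducing an isomorphism in cohomology. *)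

(* Defs.v *)
From HB Require Import structures.
From mathcomp Require Import all_boot all_order all_algebra.
From mathcomp Require Import reals.
Set Implicit Arguments. Unset Strict Implicit. Unset Printing Implicit Defensive.
Import GRing.Theory.
Local Open Scope ring_scope.

Section DGADefs.
Variable R : realType.

(* A graded-commutative (N-)graded algebra over R: an associative unital
   R-algebra A together with subspaces A^k (gca_hom k) such that
   A = (+)_k A^k (direct sum), A^i A^j <= A^(i+j), 1 in A^0, and
   x y = (-1)^(ij) y x for x in A^i, y in A^j. *)
Record GCA := {
  gca_car :> algType R;
  gca_hom : nat -> gca_car -> Prop;
  gca_hom0 : forall k, gca_hom k 0;
  gca_homD : forall k x y, gca_hom k x -> gca_hom k y -> gca_hom k (x + y);
  gca_homZ : forall k (c : R) x, gca_hom k x -> gca_hom k (c *: x);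
  gca_hom1 : gca_hom 0 1;
  gca_homM : forall i j x y, gca_hom i x -> gca_hom j y -> gca_hom (i + j) (x * y);
  gca_decomp : forall x, exists (n : nat) (s : nat -> gca_car),
      (forall k, gca_hom k (s k)) /\ x = \sum_(0 <= k < n) s k;
  gca_direct : forall (n : nat) (s : nat -> gca_car), (forall k, gca_hom k (s k)) ->
      \sum_(0 <= k < n) s k = 0 -> forall k, (k < n)%N -> s k = 0;
  gca_comm : forall i j x y, gca_hom i x -> gca_hom j y ->
      x * y = (-1) ^+ (i * j) *: (y * x)
}.

Record DGA := {
  dga_gca :> GCA;
  dga_d : dga_gca -> dga_gca;
  dga_dD : forall x y, dga_d (x + y) = dga_d x + dga_d y;
  dga_dZ : forall (c : R) x, dga_d (c *: x) = c *: dga_d x;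
  dga_d_hom : forall k x, gca_hom k x -> gca_hom k.+1 (dga_d x);
  dga_dd : forall x, dga_d (dga_d x) = 0;
  dga_leibniz : forall i x y, gca_hom i x ->
      dga_d (x * y) = dga_d x * y + (-1) ^+ i *: (x * dga_d y)
}.

Definition exact (A : DGA) (x : A) : Prop := exists y : A, dga_d y = x.

(* H^0(A) = R, i.e. the closed degree-0 elements are the multiples of 1
   (there are no nonzero exact elements of degree 0). *)
Definition connected (A : DGA) : Prop :=
  forall x : A, gca_hom 0 x -> dga_d x = 0 -> exists c : R, x = c *: 1.

Definition gca_morph (A B : GCA) (f : A -> B) : Prop :=
  [/\ (forall x y, f (x + y) = f x + f y),
      (forall (c : R) x, f (c *: x) = c *: f x),
      f 1 = 1,
      (forall x y, f (x * y) = f x * f y) &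
      (forall k x, gca_hom k x -> gca_hom k (f x))].

Definition dga_morph (A B : DGA) (f : A -> B) : Prop :=
  gca_morph f /\ (forall x, f (dga_d x) = dga_d (f x)).

(* f induces an isomorphism H^k(A) -> H^k(B) for every k *)
Definition quasi_iso (A B : DGA) (f : A -> B) : Prop :=
  forall k : nat,
    (forall x : A, gca_hom k x -> dga_d x = 0 -> exact (f x) -> exact x) /\
    (forall y : B, gca_hom k y -> dga_d y = 0 ->
       exists x : A, [/\ gca_hom k x, dga_d x = 0 & exact (f x - y)]).

Definition subalg_gen (A : GCA) (S : A -> Prop) (x : A) : Prop :=
  forall P : A -> Prop, P 1 -> (forall y, S y -> P y) ->
    (forall y z, P y -> P z -> P (y + z)) ->
    (forall (c : R) y, P y -> P (c *: y)) ->
    (forall y z, P y -> P z -> P (y * z)) -> P x.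

(* Minimal DGA: free as a graded-commutative algebra (universal property)
   on homogeneous generators g indexed by a well-ordered set (I, lt), with
   nondecreasing degrees and d(g t) in the subalgebra generated by the
   preceding generators. *)
Definition is_minimal (M : DGA) : Prop :=
  exists (I : Type) (lt : I -> I -> Prop) (g : I -> M) (dg : I -> nat),
    [/\ well_founded lt /\ (forall i, ~ lt i i) /\
        (forall i j k, lt i j -> lt j k -> lt i k) /\
        (forall i j, lt i j \/ i = j \/ lt j i),
      (forall t, gca_hom (dg t) (g t)),
      (forall m t, lt m t -> (dg m <= dg t)%N),
      (forall t, subalg_gen (fun y => exists m, lt m t /\ y = g m) (dga_d (g t))) &
      (forall (B : GCA) (h : I -> B), (forall t, gca_hom (dg t) (h t)) ->
         exists phi : M -> B,
           [/\ gca_morph phi, (forall t, phi (g t) = h t) &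
               forall psi : M -> B, gca_morph psi -> (forall t, psi (g t) = h t) ->
                 forall x, psi x = phi x])].

(* C (a DGA with zero differential) is a copy of the cohomology algebra
   H(A): theta sends C^k to closed elements of A^k and induces a graded
   algebra isomorphism C -> H(A). *)
Definition cohomology_model (C A : DGA) (theta : C -> A) : Prop :=
  [/\ (forall x : C, dga_d x = 0),
      (forall x y, theta (x + y) = theta x + theta y) /\
      (forall (c : R) x, theta (c *: x) = c *: theta x),
      theta 1 = 1 /\ (forall x y, exact (theta (x * y) - theta x * theta y)),
      (forall k x, gca_hom k x -> gca_hom k (theta x) /\ dga_d (theta x) = 0) &
      (forall k x, gca_hom k x -> exact (theta x) -> x = 0) /\
      (forall k y, gca_hom k y -> dga_d y = 0 ->
         exists x, gca_hom k x /\ exact (theta x - y))].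

(* A is formal: it has a minimal model f : M -> A and a DGA morphism
   g : M -> H(A) inducing an isomorphism in cohomology. *)
Definition formal (A : DGA) : Prop :=
  exists (M C : DGA) (f : M -> A) (g : M -> C) (theta : C -> A),
    [/\ is_minimal M, dga_morph f /\ quasi_iso f,
        cohomology_model theta & dga_morph g /\ quasi_iso g].

(* representative sum_i bar(xi_0)...bar(xi_(i-1)) b_i xi_(i+1) ... xi_(n-1),
   indices shifted to 0..n-1; xi_j has degree p + q j - 1. *)
Definition massey_elt (A : GCA) (n p : nat) (q : nat -> nat) (b xi : nat -> A) : A :=
  \sum_(0 <= i < n)
    ((\prod_(0 <= j < i) ((-1) ^+ (p + q j - 1) *: xi j)) * b i
       * \prod_(i.+1 <= j < n) xi j).

(* the a-Massey product <a; b_0, ..., b_(n-1)> (a of even degree p, b_i of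
   degree q i) is defined and does not contain 0 *)
Definition massey_nontrivial (A : DGA) (n p : nat) (a : A) (q : nat -> nat)
    (b : nat -> A) : Prop :=
  [/\ gca_hom p a, ~~ odd p, dga_d a = 0,
      (forall i, (i < n)%N ->
         [/\ gca_hom (q i) (b i), dga_d (b i) = 0 & exact (a * b i)]) &
      forall xi : nat -> A,
        (forall i, (i < n)%N -> gca_hom (p + q i - 1) (xi i) /\ dga_d (xi i) = a * b i) ->
        ~ exact (massey_elt n p q b xi)].

End DGADefs.

(* Main.v *)
Require Import Defs.
From HB Require Import structures.
From mathcomp Require Import all_boot all_order all_algebra.
From mathcomp Require Import reals.
From Stdlib Require Import ClassicalEpsilon.
Set Implicit Arguments. Unset Strict Implicit. Unset Printing Implicit Defensive.
Import GRing.Theory.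
Local Open Scope ring_scope.

Lemma homN (R : realType) (A : GCA R) k (x : A) : gca_hom k x -> gca_hom k (- x).
Proof. by move=> h; rewrite -scaleN1r; apply: gca_homZ. Qed.

Lemma homB (R : realType) (A : GCA R) k (x y : A) :
  gca_hom k x -> gca_hom k y -> gca_hom k (x - y).
Proof. by move=> hx hy; apply: gca_homD => //; apply: homN. Qed.

Lemma sum_hom_eq (R : realType) (A : GCA R) N (s t : nat -> A) :
  (forall k, gca_hom k (s k)) -> (forall k, gca_hom k (t k)) ->
  \sum_(0 <= k < N) s k = \sum_(0 <= k < N) t k -> forall k, (k < N)%N -> s k = t k.
Proof.
move=> hs ht e k kN; apply/eqP; rewrite -subr_eq0; apply/eqP.
apply: (@gca_direct _ _ N (fun k => s k - t k)) => //.
  by move=> j; apply: homB.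
by rewrite sumrB e subrr.
Qed.

Lemma sum_delta (R : realType) (A : GCA R) N m (x : A) : (m < N)%N ->
  \sum_(0 <= k < N) (if k == m then x else 0) = x.
Proof. by move=> mN; rewrite -big_mkcond /= big_nat1_eq /= mN. Qed.

Lemma hom_delta (R : realType) (A : GCA R) m (x : A) : gca_hom m x ->
  forall k, gca_hom k (if k == m then x else 0).
Proof. by move=> h k; case: eqP => [->|_] //; apply: gca_hom0. Qed.

Lemma hom_uniq (R : realType) (A : GCA R) i j (x : A) :
  gca_hom i x -> gca_hom j x -> i <> j -> x = 0.
Proof.
move=> hi hj ij.
have := @sum_hom_eq _ _ (maxn i j).+1 _ _ (hom_delta hi) (hom_delta hj).
rewrite !sum_delta ?ltnS ?leq_maxl ?leq_maxr // => /(_ erefl i).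
rewrite eqxx ltnS leq_maxl => /(_ isT) ->.
by case: eqP => // /esym.
Qed.

Lemma decomp_big (R : realType) (A : GCA R) (x : A) :
  exists N0 (s : nat -> A), (forall k, gca_hom k (s k)) /\
    forall N, (N0 <= N)%N -> x = \sum_(0 <= k < N) s k.
Proof.
have [N0 [s [hs ex]]] := gca_decomp x.
exists N0, (fun k => if (k < N0)%N then s k else 0); split.
  by move=> k; case: ifP => _; [apply: hs | apply: gca_hom0].
move=> N NN0; rewrite (@big_cat_nat _ _ _ N0 0 N) /=; last 2 first; [exact: leq0n | exact: NN0 |].
rewrite [X in _ + X]big1_seq ?addr0; last first.
  by move=> i /andP[_]; rewrite mem_index_iota => /andP[]; rewrite leqNgt => /negbTE ->.
rewrite ex; apply: eq_big_nat => i /andP[_ ->] //.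
Qed.

Lemma d0 (R : realType) (A : DGA R) : dga_d (0 : A) = 0.
Proof. by have := @dga_dZ _ A 0 0; rewrite !scale0r. Qed.

Lemma dN (R : realType) (A : DGA R) (x : A) : dga_d (- x) = - dga_d x.
Proof. by rewrite -scaleN1r dga_dZ scaleN1r. Qed.

Lemma dB (R : realType) (A : DGA R) (x y : A) : dga_d (x - y) = dga_d x - dga_d y.
Proof. by rewrite dga_dD dN. Qed.

Lemma d_sum (R : realType) (A : DGA R) m n (F : nat -> A) :
  dga_d (\sum_(m <= k < n) F k) = \sum_(m <= k < n) dga_d (F k).
Proof. by apply: (big_morph _ (@dga_dD _ A) (d0 A)). Qed.

Lemma d1 (R : realType) (A : DGA R) : dga_d (1 : A) = 0.
Proof.
have := dga_leibniz (1 : A) (gca_hom1 A).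
rewrite !mul1r mulr1 expr0 scale1r => h.
by apply: (@addrI _ (dga_d (1 : A))); rewrite addr0 -h.
Qed.

Lemma exactD (R : realType) (A : DGA R) (x y : A) : exact x -> exact y -> exact (x + y).
Proof. by move=> [u <-] [v <-]; exists (u + v); rewrite dga_dD. Qed.

Lemma exact0 (R : realType) (A : DGA R) : exact (0 : A).
Proof. by exists 0; rewrite d0. Qed.

Lemma exact_hom (R : realType) (A : DGA R) m (x : A) :
  gca_hom m x -> exact x -> exists y, gca_hom m.-1 y /\ dga_d y = x.
Proof.
move=> hx [y dy].
have [N0 [s [hs ey]]] := decomp_big y.
pose N := maxn N0 m.
pose t k := if k is k'.+1 then dga_d (s k') else 0.
have ht : forall k, gca_hom k (t k).
  by case=> [|k] /=; [apply: gca_hom0 | apply: dga_d_hom].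
have e : \sum_(0 <= k < N.+1) t k = \sum_(0 <= k < N.+1) (if k == m then x else 0).
  rewrite sum_delta ?ltnS ?leq_maxr // big_nat_recl //= add0r.
  by rewrite -d_sum -(ey N) ?leq_maxl.
have := sum_hom_eq ht (hom_delta hx) e (k := m).
rewrite eqxx ltnS leq_maxr => /(_ isT).
clear e; subst N t; case: m hx => [|m] hx /= tm.
  by exists 0; split; [apply: gca_hom0 | rewrite d0 -tm].
by exists (s m).
Qed.

Lemma exact_sum (R : realType) (A : DGA R) N (F : nat -> A) :
  (forall k, (k < N)%N -> exact (F k)) -> exact (\sum_(0 <= k < N) F k).
Proof.
elim: N => [|N IH] h; first by rewrite big_geq //; apply: exact0.
rewrite big_nat_recr //=; apply: exactD; last exact: h.
by apply: IH => k kN; apply: h; apply: ltnW.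
Qed.

Lemma morph0 (R : realType) (B C : GCA R) (f : B -> C) : gca_morph f -> f 0 = 0.
Proof.
case=> fD _ _ _ _; have := fD 0 0; rewrite addr0 => h.
by apply: (@addrI _ (f 0)); rewrite addr0 -h.
Qed.

Lemma morph_sum (R : realType) (B C : GCA R) (f : B -> C) m n (F : nat -> B) :
  gca_morph f -> f (\sum_(m <= k < n) F k) = \sum_(m <= k < n) f (F k).
Proof. move=> fm; apply: (big_morph _ _ (morph0 fm)); by case: fm. Qed.

Lemma morphN (R : realType) (B C : GCA R) (f : B -> C) (x : B) :
  gca_morph f -> f (- x) = - f x.
Proof. by case=> _ fZ _ _ _; rewrite -scaleN1r fZ scaleN1r. Qed.

Lemma morphB (R : realType) (B C : GCA R) (f : B -> C) (x y : B) :
  gca_morph f -> f (x - y) = f x - f y.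
Proof. by move=> fm; case: (fm) => fD _ _ _ _; rewrite fD morphN. Qed.

Lemma qi_kill (R : realType) (B C : DGA R) (f : B -> C) : dga_morph f -> quasi_iso f ->
  forall x : B, dga_d x = 0 -> f x = 0 -> exact x.
Proof.
move=> [fm fd] qi x dx fx.
have [N0 [s [hs ex]]] := decomp_big x.
have ds : forall k, (k < N0)%N -> dga_d (s k) = 0.
  pose t k := if k is k'.+1 then dga_d (s k') else 0.
  have ht : forall k, gca_hom k (t k).
    by case=> [|k] /=; [apply: gca_hom0 | apply: dga_d_hom].
  have e : \sum_(0 <= k < N0.+1) t k = \sum_(0 <= k < N0.+1) (0 : B).
    by rewrite [RHS]big1 // big_nat_recl //= add0r -d_sum -ex.
  move=> k kN.
  by have := sum_hom_eq ht (fun k => @gca_hom0 _ B k) e (k := k.+1); apply.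
have fs : forall k, (k < N0)%N -> f (s k) = 0.
  have fh : forall k, gca_hom k (f (s k)) by case: fm => _ _ _ _ fH k; apply: fH.
  have e : \sum_(0 <= k < N0) f (s k) = \sum_(0 <= k < N0) (0 : C).
    by rewrite [RHS]big1 // -morph_sum // -ex.
  by move=> k kN; have := sum_hom_eq fh (fun k => @gca_hom0 _ C k) e (k := k); apply.
rewrite (ex N0) //; apply: exact_sum => k kN.
apply: ((qi k).1 _ (hs k) (ds k kN)).
by rewrite fs //; apply: exact0.
Qed.

Definition xbar (R : realType) (A : GCA R) p (q : nat -> nat) (xi : nat -> A) j :=
  (-1) ^+ (p + q j - 1) *: xi j.
Definition Sx (R : realType) (A : GCA R) n (xi : nat -> A) k := \prod_(k <= j < n) xi j.
Definition Mx (R : realType) (A : GCA R) n p q (b xi : nat -> A) k :=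
  \sum_(k <= i < n) ((\prod_(k <= j < i) xbar p q xi j) * b i * Sx n xi i.+1).

Lemma massey_Mx (R : realType) (A : GCA R) n p q (b xi : nat -> A) :
  massey_elt n p q b xi = Mx n p q b xi 0.
Proof. by []. Qed.

Lemma Sx_ge (R : realType) (A : GCA R) n (xi : nat -> A) k : (n <= k)%N -> Sx n xi k = 1.
Proof. by move=> h; rewrite /Sx big_geq. Qed.

Lemma Sx_rec (R : realType) (A : GCA R) n (xi : nat -> A) k : (k < n)%N ->
  Sx n xi k = xi k * Sx n xi k.+1.
Proof. by move=> h; rewrite /Sx big_ltn. Qed.

Lemma Mx_ge (R : realType) (A : GCA R) n p q (b xi : nat -> A) k : (n <= k)%N ->
  Mx n p q b xi k = 0.
Proof. by move=> h; rewrite /Mx big_geq. Qed.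

Lemma Mx_rec (R : realType) (A : GCA R) n p q (b xi : nat -> A) k : (k < n)%N ->
  Mx n p q b xi k = b k * Sx n xi k.+1 + xbar p q xi k * Mx n p q b xi k.+1.
Proof.
move=> h; rewrite /Mx big_ltn // big_geq // mul1r; congr (_ + _).
rewrite big_distrr; apply: eq_big_nat => i /andP[ki _].
rewrite big_ltn //; rewrite /= -!mulrA; congr (_ * _); rewrite !mulrA.
Qed.

Lemma rev_ind (P : nat -> Prop) n : P n -> (forall k, (k < n)%N -> P k.+1 -> P k) ->
  forall k, (k <= n)%N -> P k.
Proof.
move=> Pn IH.
suff H : forall d k, (k + d)%N = n -> P k.
  by move=> k kn; apply: (H (n - k)%N); rewrite addnC subnK.
elim=> [|d IHd] k e; first by rewrite addn0 in e; rewrite e.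
apply: IH; first by rewrite -e addnS ltnS leq_addr.
by apply: IHd; rewrite addSnnS.
Qed.

Lemma comm_even (R : realType) (A : GCA R) p j (x y : A) :
  gca_hom p x -> ~~ odd p -> gca_hom j y -> x * y = y * x.
Proof.
move=> hx hp hy; rewrite (gca_comm hx hy) -signr_odd oddM (negbTE hp) /=.
by rewrite expr0 scale1r.
Qed.

Lemma sign_key (R : realType) p q : ~~ odd p -> (0 < p + q)%N ->
  (-1) ^+ (p + q - 1) = - (-1) ^+ q :> R.
Proof.
move=> hp hpos.
have [m Em] : exists m, (p + q)%N = m.+1 by case: (p + q)%N hpos => // m _; exists m.
rewrite Em subn1 /= -signr_odd -[in RHS]signr_odd.
have : odd m.+1 = odd q by rewrite -Em oddD (negbTE hp).
rewrite /= => <-.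
by case: (odd m); rewrite ?expr0 ?expr1 ?opprK.
Qed.

Definition valid (R : realType) (A : DGA R) n p (a : A) q (b xi : nat -> A) :=
  [/\ gca_hom p a, ~~ odd p, dga_d a = 0 &
   forall i, (i < n)%N -> [/\ gca_hom (q i) (b i), dga_d (b i) = 0,
      gca_hom (p + q i - 1) (xi i) & dga_d (xi i) = a * b i]].

Lemma L1 (R : realType) (A : DGA R) n p (a : A) q (b xi : nat -> A) :
  valid n p a q b xi -> forall k, (k <= n)%N ->
  dga_d (Sx n xi k) = a * Mx n p q b xi k /\ dga_d (Mx n p q b xi k) = 0.
Proof.
case=> ha hp da hv.
apply: rev_ind.
  by rewrite Sx_ge // Mx_ge // d1 d0 mulr0.
move=> k kn [dS dM].
have [hb db hx dx] := hv k kn.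
rewrite Sx_rec // Mx_rec //.
split.
  rewrite (dga_leibniz _ hx) dx dS mulrDr.
  congr (_ + _); first by rewrite mulrA.
  rewrite /xbar -scalerAl !scalerAr.
  by rewrite !mulrA (comm_even ha hp hx).
have hxb : gca_hom (p + q k - 1) (xbar p q xi k) by apply: gca_homZ.
rewrite dga_dD (dga_leibniz _ hb) db mul0r add0r dS.
rewrite (dga_leibniz _ hxb) dM mulr0 scaler0 addr0 /xbar dga_dZ dx.
rewrite -scalerAl mulrA -(comm_even ha hp hb) -scalerDl.
have [pq0|pqpos] := posnP (p + q k)%N.
  have hab : gca_hom (p + q k) (a * b k) by apply: gca_homM.
  have hab1 : gca_hom 1 (a * b k).
    rewrite -dx; apply: (dga_d_hom (k := 0)).
    by move: hx; rewrite pq0.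
  by rewrite (hom_uniq hab hab1) ?pq0 // mul0r scaler0.
by rewrite sign_key // addrN scale0r.
Qed.


Lemma morph_Mx (R : realType) (B C : GCA R) (f : B -> C) n p q (b xi : nat -> B) :
  gca_morph f -> forall k, (k <= n)%N ->
  f (Sx n xi k) = Sx n (fun j => f (xi j)) k /\
  f (Mx n p q b xi k) = Mx n p q (fun j => f (b j)) (fun j => f (xi j)) k.
Proof.
move=> fm; have [fD fZ f1 fM _] := fm.
apply: rev_ind; first by rewrite !Sx_ge // !Mx_ge // f1 (morph0 fm).
move=> k kn [IS IM].
rewrite (Sx_rec xi kn) (Sx_rec (fun j => f (xi j)) kn).
rewrite (Mx_rec p q b xi kn) (Mx_rec p q (fun j => f (b j)) (fun j => f (xi j)) kn).
rewrite fD !fM IS IM /xbar fZ.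
split => //.
Qed.

Lemma Mx_zero (R : realType) (C : GCA R) n p q (b xi : nat -> C) :
  (2 <= n)%N -> (forall j, (j < n)%N -> xi j = 0) -> Mx n p q b xi 0 = 0.
Proof.
move=> n2 hx.
have n0 : (0 < n)%N by apply: leq_trans n2.
have n1 : (1 < n)%N by [].
rewrite (Mx_rec _ _ _ _ n0) (Sx_rec _ n1) /xbar (hx 1%N n1) (hx 0%N n0).
by rewrite scaler0 !mul0r mulr0 addr0.
Qed.

Lemma sign_oddm (R : realType) e m : odd m -> (-1) ^+ (e * m) = (-1) ^+ e :> R.
Proof. by move=> hm; rewrite -signr_odd oddM hm andbT signr_odd. Qed.

Lemma two_neq0 (R : realType) : (2%:R : R) != 0.
Proof. by rewrite Num.Theory.pnatr_eq0. Qed.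

Lemma sq_odd0 (R : realType) (A : GCA R) m (x : A) : gca_hom m x -> odd m -> x * x = 0.
Proof.
move=> hx hm; have := gca_comm hx hx; rewrite sign_oddm // -signr_odd hm expr1 scaleN1r.
move=> h; have h2 : (x * x) + (x * x) = 0 by rewrite {1}h addNr.
have : (2%:R : R) *: (x * x) = 0 by rewrite scaler_nat mulr2n.
move/eqP; rewrite scaler_eq0 (negbTE (two_neq0 R)) /=.
by move/eqP.
Qed.

Lemma LA (R : realType) (A : GCA R) n p q (b xi : nat -> A) (al : A) :
  ~~ odd p -> (0 < p)%N -> gca_hom p.-1 al ->
  (forall i, (i < n)%N -> gca_hom (q i) (b i) /\ gca_hom (p + q i - 1) (xi i)) ->
  forall k, (k <= n)%N ->
  Sx n (fun j => xi j + al * b j) k = Sx n xi k + al * Mx n p q b xi k /\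
  Mx n p q b (fun j => xi j + al * b j) k = Mx n p q b xi k.
Proof.
move=> hp p0 ha hv.
have oddp1 : odd p.-1 by clear -hp p0; move: hp p0; case: p => //= p'; rewrite negbK.
have F3 : al * al = 0 := sq_odd0 ha oddp1.
apply: rev_ind; first by rewrite !Sx_ge // !Mx_ge // mulr0 addr0.
move=> k kn [IS IM].
have [hb hx] := hv k kn.
rewrite (Sx_rec (fun j => xi j + al * b j) kn) (Sx_rec xi kn) (Mx_rec p q b (fun j => xi j + al * b j) kn) (Mx_rec p q b xi kn) IS IM.
have F1 : xi k * al = (-1) ^+ (p + q k - 1) *: (al * xi k).
  by rewrite (gca_comm hx ha) sign_oddm.
have F2 : al * b k * al = 0.
  by rewrite -mulrA (gca_comm hb ha) -scalerAr mulrA F3 mul0r scaler0.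
have F4 : (-1) ^+ (p + q k - 1) *: (al * b k) = - (b k * al).
  rewrite (gca_comm ha hb) mulnC sign_oddm // scalerA sign_key //; last first.
    by apply: leq_trans p0 (leq_addr _ _).
  by rewrite mulNr -expr2 sqrr_sign scaleN1r.
split.
  have e1 : xi k * (al * Mx n p q b xi k.+1) = al * (xbar p q xi k * Mx n p q b xi k.+1).
    by rewrite mulrA F1 -scalerAl /xbar -scalerAl -scalerAr mulrA.
  have e2 : al * b k * (al * Mx n p q b xi k.+1) = 0 by rewrite mulrA F2 mul0r.
  rewrite mulrDl !mulrDr e1 e2 addr0 -!addrA; congr (_ + _).
  by rewrite addrC mulrA.
rewrite /xbar scalerDr mulrDl mulrDr F4 mulNr mulrA.
by rewrite -addrA [X in _ + X]addrC -addrA addNr addr0.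
Qed.

Lemma sign_even (R : realType) p : ~~ odd p -> (-1) ^+ p = 1 :> R.
Proof. by move=> hp; rewrite -signr_odd (negbTE hp) expr0. Qed.

Lemma valid_b (R : realType) (A : DGA R) n p (a : A) q (b xi be : nat -> A) :
  valid n p a q b xi ->
  (forall i, (i < n)%N -> gca_hom (q i).-1 (be i) /\ (q i = 0%N -> be i = 0)) ->
  valid n p a q (fun j => b j + dga_d (be j)) (fun j => xi j + a * be j).
Proof.
case=> ha hp da hv hbe; split => // i ni.
have [hb db hx dx] := hv i ni; have [hbi bz] := hbe i ni.
split.
- have [q0|qpos] := posnP (q i); first by rewrite bz // d0 addr0.
  apply: gca_homD => //; have := dga_d_hom hbi; by rewrite prednK.
- by rewrite dga_dD db dga_dd add0r.
- have [q0|qpos] := posnP (q i); first by rewrite bz // mulr0 addr0.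
  apply: gca_homD => //; have := gca_homM ha hbi.
  by rewrite -subn1 addnBA.
- rewrite dga_dD dx (dga_leibniz _ ha) da mul0r add0r sign_even // scale1r.
  by rewrite mulrDr.
Qed.

Lemma perm6 (V : zmodType) (x1 x2 x3 x4 x5 x6 : V) :
  x1 + x2 + x3 + (x4 + x5 + x6) = x1 + x4 + (x3 + x6 + (x2 + x5)).
Proof.
rewrite -!addrA; congr (_ + _).
rewrite [x3 + (x4 + _)]addrCA addrCA; congr (_ + _).
rewrite addrCA; congr (_ + _).
by rewrite [RHS]addrC addrA.
Qed.

Lemma LB (R : realType) (A : DGA R) n p (a : A) q (b xi be : nat -> A) :
  valid n p a q b xi ->
  (forall i, (i < n)%N -> gca_hom (q i).-1 (be i) /\ (q i = 0%N -> be i = 0)) ->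
  forall k, (k <= n)%N -> exists W,
    Sx n (fun j => xi j + a * be j) k = Sx n xi k + a * W /\
    Mx n p q (fun j => b j + dga_d (be j)) (fun j => xi j + a * be j) k =
      Mx n p q b xi k + dga_d W.
Proof.
move=> hv0 hbe; have hv' := valid_b hv0 hbe; have L1' := L1 hv'.
case: hv0 => ha hp da hv.
apply: rev_ind.
  by exists 0; rewrite !Sx_ge // !Mx_ge // mulr0 d0 !addr0.
move=> k kn [W [IS IM]].
have [hb db hx dx] := hv k kn; have [hbi bz] := hbe k kn.
have [dS' _] := L1' k.+1 kn.
exists (be k * Sx n (fun j => xi j + a * be j) k.+1 + xi k * W).
rewrite (Sx_rec (fun j => xi j + a * be j) kn) (Sx_rec xi kn).
rewrite (Mx_rec p q (fun j => b j + dga_d (be j)) (fun j => xi j + a * be j) kn).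
rewrite (Mx_rec p q b xi kn).
move: dS' IS IM.
set S' := Sx n (fun j => xi j + a * be j) k.+1.
set M' := Mx n p q (fun j => b j + dga_d (be j)) (fun j => xi j + a * be j) k.+1.
set S := Sx n xi k.+1; set M := Mx n p q b xi k.+1.
move=> dS' IS IM.
split.
  rewrite mulrDl {1}IS mulrDr mulrDr -!addrA; congr (_ + _).
  rewrite addrC mulrA; congr (_ + _); first by rewrite mulrA.
  by rewrite -(comm_even ha hp hx) mulrA.
have hbd : gca_hom (q k).-1 (be k) := hbi.
rewrite dga_dD (dga_leibniz _ hbi) (dga_leibniz _ hx) dS' dx.
rewrite /xbar scalerDr mulrDl mulrDl {1}IS IM mulrDr.
have T1 : b k * (a * W) = a * b k * W by rewrite mulrA (comm_even ha hp hb).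
have T2 : (-1) ^+ (q k).-1 *: (be k * (a * (M + dga_d W))) =
          (-1) ^+ (p + q k - 1) *: (a * be k) * (M + dga_d W).
  have [q0|qpos] := posnP (q k); first by rewrite bz // !(mul0r, mulr0, scaler0).
  have sgn : (-1) ^+ (q k).-1 = (-1) ^+ (p + q k - 1) :> R.
    rewrite -subn1 -[LHS]signr_odd -[RHS]signr_odd -addnBA // oddD (negbTE hp) //.
  by rewrite sgn -scalerAl mulrA (comm_even ha hp hbi).
have T3 : (-1) ^+ (p + q k - 1) *: xi k * (M + dga_d W) =
          (-1) ^+ (p + q k - 1) *: xi k * M + (-1) ^+ (p + q k - 1) *: (xi k * dga_d W).
  by rewrite mulrDr scalerAl.
by rewrite T1 T2 T3 perm6.
Qed.
Lemma choicef (T U : Type) (P : T -> U -> Prop) :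
  (forall t, exists u, P t u) -> exists f : T -> U, forall t, P t (f t).
Proof.
move=> h; exists (fun t => proj1_sig (constructive_indefinite_description _ (h t))).
by move=> t; exact: proj2_sig.
Qed.

Lemma exact_hom' (R : realType) (A : DGA R) m (x : A) :
  gca_hom m x -> exact x ->
  exists y, [/\ gca_hom m.-1 y, dga_d y = x & (m = 0%N -> y = 0)].
Proof.
move=> hx ex; have [y [hy dy]] := exact_hom hx ex.
case: m hx hy => [|m] hx hy; last by exists y.
exists 0; split => //; first exact: gca_hom0.
have h1 : gca_hom 1 x by rewrite -dy; apply: (dga_d_hom (k := 0)).
by rewrite d0 (hom_uniq hx h1).
Qed.

Lemma exact_mull (R : realType) (A : DGA R) i (al y : A) :
  gca_hom i al -> dga_d y = 0 -> exact (dga_d al * y).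
Proof.
by move=> ha dy; exists (al * y); rewrite (dga_leibniz _ ha) dy mulr0 scaler0 addr0.
Qed.

Lemma exact_mulr (R : realType) (A : DGA R) i (x y : A) :
  gca_hom i x -> dga_d x = 0 -> exact (x * dga_d y).
Proof.
move=> hx dx; exists ((-1) ^+ i *: (x * y)).
by rewrite dga_dZ (dga_leibniz _ hx) dx mul0r add0r scalerA -expr2 sqrr_sign scale1r.
Qed.

Lemma exactB (R : realType) (A : DGA R) (x y : A) : exact x -> exact y -> exact (x - y).
Proof. by move=> [u <-] [v <-]; exists (u - v); rewrite dB. Qed.

Lemma Mx_ext (R : realType) (A : GCA R) n p q (b1 b2 xi1 xi2 : nat -> A) :
  (forall j, (j < n)%N -> b1 j = b2 j) -> (forall j, (j < n)%N -> xi1 j = xi2 j) ->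
  forall k, (k <= n)%N ->
  Sx n xi1 k = Sx n xi2 k /\ Mx n p q b1 xi1 k = Mx n p q b2 xi2 k.
Proof.
move=> eb ex; apply: rev_ind; first by rewrite !Sx_ge // !Mx_ge.
move=> k kn [IS IM].
rewrite (Sx_rec xi1 kn) (Sx_rec xi2 kn) (Mx_rec p q b1 xi1 kn) (Mx_rec p q b2 xi2 kn).
by rewrite IS IM /xbar eb // ex.
Qed.

Unset Implicit Arguments.
Theorem theorem2p10 (R : realType) (A : DGA R) :
  connected A ->
  (exists (n p : nat) (a : A) (q : nat -> nat) (b : nat -> A),
      (2 <= n)%N /\ massey_nontrivial n p a q b) ->
  ~ formal A.
Proof.
move=> _ [n [p [a [q [b [n2 [ha hp da hb hnt]]]]]]].
move=> [M [C [f [g [th [_ [fm fqi] [dC _ _ _ _] [gm gqi]]]]]]].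
have [fmg fd] := fm; have [fD fZ f1 fM fH] := fmg.
have [gmg gd] := gm.
have [aM [haM daM eaM]] := (fqi p).2 a ha da.
have hfa : gca_hom p (f aM - a) by apply: homB => //; apply: fH.
have [al [hal dal al0]] := exact_hom' hfa eaM.
have /choicef [bM hbM] : forall i, exists x : M, (i < n)%N ->
    [/\ gca_hom (q i) x, dga_d x = 0 & exact (f x - b i)].
  move=> i.
  case: (ltnP i n) => [ni|ni]; last by exists 0.
  have [hbi dbi _] := hb i ni.
  have [x hx] := (fqi (q i)).2 (b i) hbi dbi.
  by exists x.
have /choicef [be hbe] : forall i, exists y : A, (i < n)%N ->
    [/\ gca_hom (q i).-1 y, dga_d y = f (bM i) - b i & (q i = 0%N -> y = 0)].
  move=> i.
  case: (ltnP i n) => [ni|ni]; last by exists 0.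
  have [hbMi dbMi ebi] := hbM i ni; have [hbi _ _] := hb i ni.
  have hd : gca_hom (q i) (f (bM i) - b i) by apply: homB => //; apply: fH.
  have [y hy] := exact_hom' hd ebi.
  by exists y.
have fa : f aM = a + dga_d al by rewrite dal addrC subrK.
have fb : forall i, (i < n)%N -> f (bM i) = b i + dga_d (be i).
  by move=> i ni; have [_ -> _] := hbe i ni; rewrite addrC subrK.
have dfb : forall i, (i < n)%N -> dga_d (f (bM i)) = 0.
  by move=> i ni; rewrite -fd; have [_ -> _] := hbM i ni; exact: morph0 fmg.
have /choicef [xM hxM] : forall i, exists x : M, (i < n)%N ->
   [/\ gca_hom (p + q i - 1) x, dga_d x = aM * bM i & g x = 0].
  move=> i; case: (ltnP i n) => [ni|ni]; last by exists 0.
  have [hbMi dbMi _] := hbM i ni; have [hbi dbi eab] := hb i ni.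
  have [hbei dbei _] := hbe i ni.
  have hab : gca_hom (p + q i) (aM * bM i) by apply: gca_homM.
  have dab : dga_d (aM * bM i) = 0.
    by rewrite (dga_leibniz _ haM) daM dbMi mul0r mulr0 scaler0 addr0.
  have efab : exact (f (aM * bM i)).
    rewrite fM fa mulrDl.
    apply: exactD; last by apply: (exact_mull hal); rewrite dfb.
    rewrite fb // mulrDr; apply: exactD => //; exact: (@exact_mulr _ _ p a (be i) ha da).
  have eab' := (fqi (p + q i)%N).1 _ hab dab efab.
  have [eta [heta deta _]] := exact_hom' hab eab'.
  have hgeta : gca_hom (p + q i).-1 (g eta) by case: gmg => _ _ _ _ gH; apply: gH.
  have [z [hz dz ez]] := (gqi (p + q i).-1).2 (g eta) hgeta (dC _).
  have gz : g z = g eta.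
    case: ez => y dy; apply/eqP; rewrite -subr_eq0 -dy dC //.
  exists (eta - z) => _; split.
  - by rewrite subn1; apply: homB.
  - by rewrite dB deta dz subr0.
  - by rewrite morphB // gz subrr.
have vM : valid n p aM q bM xM.
  split => // i ni; have [h1 h2 _] := hbM i ni; have [h3 h4 _] := hxM i ni; by split.
have [_ dmM] := L1 vM (leq0n n).
have gmM : g (Mx n p q bM xM 0) = 0.
  have [_ ->] := morph_Mx p q bM xM gmg (leq0n n).
  by apply: Mx_zero => // j nj; have [_ _ ->] := hxM j nj.
have emM := qi_kill gm gqi dmM gmM.
have emA : exact (Mx n p q (fun j => f (bM j)) (fun j => f (xM j)) 0).
  have [_ <-] := morph_Mx p q bM xM fmg (leq0n n).
  by case: emM => y <-; exists (f y); rewrite fd.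
set b' := fun j => f (bM j).
set x' := fun j => f (xM j).
pose x2 := fun j => x' j - al * b' j.
have hb' : forall i, (i < n)%N -> gca_hom (q i) (b' i).
  by move=> i ni; have [h _ _] := hbM i ni; apply: fH.
have hx' : forall i, (i < n)%N -> gca_hom (p + q i - 1) (x' i).
  by move=> i ni; have [h _ _] := hxM i ni; apply: fH.
have hx2 : forall i, (i < n)%N -> gca_hom (p + q i - 1) (x2 i).
  move=> i ni; apply: homB; first exact: hx'.
  have [p0|ppos] := posnP p; first by rewrite al0 // mul0r; apply: gca_hom0.
  have e : (p.-1 + q i)%N = (p + q i - 1)%N by rewrite -subn1 addnBAC.
  by rewrite -e; apply: gca_homM => //; apply: hb'.
have emA2 : exact (Mx n p q b' x2 0).
  have [p0|ppos] := posnP p.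
    have [_ <-] := @Mx_ext _ _ n p q b' b' x' x2 (fun _ _ => erefl)
      (fun j _ => etrans (esym (subr0 _)) (congr1 (fun t => x' j - t) (esym (etrans (congr1 (fun t => t * b' j) (al0 p0)) (mul0r _))))) 0 (leq0n n).
    exact: emA.
  have [_ <-] := LA hp ppos hal (fun i ni => conj (hb' i ni) (hx2 i ni)) (leq0n n).
  have [_ ->] := @Mx_ext _ _ n p q b' b' (fun j => x2 j + al * b' j) x' (fun _ _ => erefl)
      (fun j _ => subrK _ _) 0 (leq0n n).
  exact: emA.
pose x3 := fun j => x2 j - a * be j.
have hbe3 : forall i, (i < n)%N -> gca_hom (q i).-1 (be i) /\ (q i = 0%N -> be i = 0).
  by move=> i ni; have [h1 _ h3] := hbe i ni; split.
have v3 : valid n p a q b x3.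
  split => // i ni.
  have [hbi dbi _] := hb i ni; have [hbei dbei bei0] := hbe i ni.
  have [_ dbMi _] := hbM i ni; have [_ dxMi _] := hxM i ni.
  split => //.
    apply: homB; first exact: hx2.
    have [q0|qpos] := posnP (q i); first by rewrite bei0 // mulr0; apply: gca_hom0.
    have e : (p + (q i).-1)%N = (p + q i - 1)%N by rewrite -subn1 addnBA.
    by rewrite -e; apply: gca_homM.
  rewrite /x3 /x2 /x' /b' !dB -fd dxMi fM (dga_leibniz _ hal) -fd dbMi (morph0 fmg).
  rewrite mulr0 scaler0 addr0 dal (dga_leibniz _ ha) da mul0r add0r sign_even // scale1r dbei.
  rewrite mulrBl mulrBr !opprB.
  by rewrite [X in X + _]addrC subrK addrC subrK.
have [W [_ eW]] := LB v3 hbe3 (leq0n n).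
have [_ eM] := @Mx_ext _ _ n p q (fun j => b j + dga_d (be j)) b'
  (fun j => x3 j + a * be j) x2 (fun j nj => esym (fb j nj)) (fun j _ => subrK _ _) 0 (leq0n n).
rewrite eM in eW.
apply: (hnt x3).
  by move=> i ni; case: v3 => _ _ _ hv; have [_ _ h1 h2] := hv i ni.
rewrite massey_Mx.
have -> : Mx n p q b x3 0 = Mx n p q b' x2 0 - dga_d W by rewrite eW addrK.
by apply: exactB => //; exists W.
Qed.
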